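(* Let $K$ be a class of partial functions from $\mathbb{N}^k$ to $\mathbb{N}$ (of various arities $k\ge 1$) satisfying the following three conditions: (1) (Closure) $K$ contains all partial recursive functions and is closed under substitution (composition), primitive recursion and the $\mu$-operator (minimization). (2) (Computation records) For every unary function $f\in K$ there exist a set $M\subseteq\mathbb{N}$ and unary functions $\alpha,\omega\in K$ whose domains contain $M$, such that (a) the indicator function of $M$ (equal to $1$ on $M$ and $0$ outside $M$) belongs to $K$, and (b) for all $x,y\in\mathbb{N}$, $f(x)$ is defined and equals $y$ if and only if there exists $m\in M$ with $\alpha(m)=x$ and $\omega(m)=y$. (3) (Programs) There exists a binary function $F\in K$ that is universal for the unary functions in $K$: for every unary $f\in K$ there is $n\in\mathbb{N}$ such that the function $x\mapsto F(n,x)$ coincides with $f$ (as partial functions). Then there exists a set $A\subseteq\mathbb{N}$ such that $K$ is exactly the class of all partial functions that are partial recursive relative to the oracle set $A$.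
   Context: Substitution, primitive recursion and minimization are the usual operations on partial functions of natural arguments. A partial function is partial recursive relative to a set $A\subseteq\mathbb{N}$ if it is computable by an oracle machine with oracle $A$ (equivalently, its graph is recursively enumerable relative to $A$). *)

(* Defs.v *)
From mathcomp Require Import all_boot.
Set Implicit Arguments.
Unset Strict Implicit.
Unset Printing Implicit Defensive.

Definition pfun (k : nat) := k.-tuple nat -> option nat.

(* f is the substitution h(g_1, ..., g_m) (strict semantics). *)
Definition comp_spec (m n : nat) (h : pfun m) (gs : 'I_m -> pfun n) (f : pfun n) :=
  forall (x : n.-tuple nat) (y : nat), f x = Some y <->
    exists vs : m.-tuple nat, (forall i, gs i x = Some (tnth vs i)) /\ h vs = Some y.

Fixpoint prec_aux (n : nat) (g : pfun n) (h : pfun n.+2) (x : n.-tuple nat) (y : nat)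
  : option nat :=
  match y with
  | 0 => g x
  | y'.+1 => match prec_aux g h x y' with
             | Some v => h [tuple of rcons [tuple of rcons x y'] v]
             | None => None
             end
  end.

Definition primrec_spec (n : nat) (g : pfun n) (h : pfun n.+2) (f : pfun n.+1) :=
  forall (x : n.-tuple nat) (y : nat), f [tuple of rcons x y] = prec_aux g h x y.

Definition mu_spec (n : nat) (g : pfun n.+1) (f : pfun n) :=
  forall (x : n.-tuple nat) (y : nat), f x = Some y <->
    g [tuple of rcons x y] = Some 0 /\
    (forall z, z < y -> exists v, g [tuple of rcons x z] = Some v.+1).

Inductive PRgen (O : option (nat -> bool)) : forall k, pfun k -> Prop :=
| PR_zero k : @PRgen O k (fun _ => Some 0)
| PR_succ : @PRgen O 1 (fun x => Some (thead x).+1)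
| PR_proj k (i : 'I_k) : @PRgen O k (fun x => Some (tnth x i))
| PR_oracle (A : nat -> bool) : O = Some A ->
    @PRgen O 1 (fun x => Some (nat_of_bool (A (thead x))))
| PR_comp m n (h : pfun m) (gs : 'I_m -> pfun n) (f : pfun n) :
    PRgen O h -> (forall i, PRgen O (gs i)) -> comp_spec h gs f -> PRgen O f
| PR_prim n (g : pfun n) (h : pfun n.+2) (f : pfun n.+1) :
    PRgen O g -> PRgen O h -> primrec_spec g h f -> PRgen O f
| PR_mu n (g : pfun n.+1) (f : pfun n) :
    PRgen O g -> mu_spec g f -> PRgen O f.

Definition partial_recursive k (f : pfun k) := PRgen None f.
Definition partial_recursive_in (A : nat -> bool) k (f : pfun k) := PRgen (Some A) f.

(* A class of partial functions; only arities k >= 1 are meaningful. *)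
Definition pclass := forall k, pfun k -> Prop.

Definition unary (f : pfun 1) (x : nat) : option nat := f [tuple x].

(* Main.v *)
Require Import Defs.
From mathcomp Require Import all_boot.
From Stdlib Require Import FunctionalExtensionality ClassicalEpsilon Lia.
From mathcomp Require Import zify.
Set Implicit Arguments.
Unset Strict Implicit.
Unset Printing Implicit Defensive.

Definition PRq O m (h : seq nat -> option nat) := PRgen O (fun t : m.-tuple nat => h t).
Definition Kq (K : pclass) m (h : seq nat -> option nat) := K m (fun t : m.-tuple nat => h t).

Definition liftq m (f : pfun m) : seq nat -> option nat :=
  fun s => f [tuple nth 0 s i | i < m].

Lemma lift_tuple m (f : pfun m) (t : m.-tuple nat) : liftq f t = f t.
Proof.
rewrite /liftq; congr f; apply: eq_from_tnth => i.
by rewrite tnth_mktuple (tnth_nth 0).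
Qed.

Lemma lift_fun m (f : pfun m) : (fun t : m.-tuple nat => liftq f t) = f.
Proof. by apply: functional_extensionality => t; rewrite lift_tuple. Qed.

Lemma PRq_ext O m (h h' : seq nat -> option nat) : PRq O m h -> (forall t : m.-tuple nat, h t = h' t) -> PRq O m h'.
Proof.
move=> H E; rewrite /PRq.
have -> : (fun t : m.-tuple nat => h' t) = (fun t : m.-tuple nat => h t).
  by apply: functional_extensionality => t; rewrite E.
exact: H.
Qed.

Lemma Kq_ext K m (h h' : seq nat -> option nat) : Kq K m h -> (forall t : m.-tuple nat, h t = h' t) -> Kq K m h'.
Proof.
move=> H E; rewrite /Kq.
have -> : (fun t : m.-tuple nat => h' t) = (fun t : m.-tuple nat => h t).
  by apply: functional_extensionality => t; rewrite E.
exact: H.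
Qed.

Lemma PRgen_q O m (f : pfun m) (h : seq nat -> option nat) : PRgen O f -> (forall t : m.-tuple nat, f t = h t) -> PRq O m h.
Proof.
move=> H E; rewrite /PRq.
have <- : f = (fun t : m.-tuple nat => h t) by apply: functional_extensionality => t; rewrite E.
exact: H.
Qed.

Lemma Kgen_q (K : pclass) m (f : pfun m) (h : seq nat -> option nat) : K m f -> (forall t : m.-tuple nat, f t = h t) -> Kq K m h.
Proof.
move=> H E; rewrite /Kq.
have <- : f = (fun t : m.-tuple nat => h t) by apply: functional_extensionality => t; rewrite E.
exact: H.
Qed.

Definition ocomp (gl : seq (seq nat -> option nat)) (h : seq nat -> option nat) s :=
  if all (fun g => g s != None) gl then h (map (fun g => odflt 0 (g s)) gl) else None.

Fixpoint allL (P : (seq nat -> option nat) -> Prop) gl :=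
  match gl with [::] => True | g :: r => P g /\ allL P r end.

Lemma allL_nth P gl i : allL P gl -> i < size gl -> P (nth (fun _ => None) gl i).
Proof.
elim: gl i => [|g gl IH] [|i] //= [Hg Hr] Hi; last exact: IH.
done.
Qed.

Lemma comp_spec_ocomp m n (h : seq nat -> option nat) (gl : seq (seq nat -> option nat)) : size gl = m ->
  comp_spec (fun t : m.-tuple nat => h t)
    (fun i (t : n.-tuple nat) => nth (fun _ => None) gl i t) (fun t => ocomp gl h t).
Proof.
move=> Hs x y; rewrite /ocomp; case: ifP => Hall.
- split.
  + move=> Hh.
    have sz : size (map (fun g => odflt 0 (g (x : seq nat))) gl) == m by rewrite size_map Hs.
    exists (Tuple sz); split => //.
    move=> i; rewrite (tnth_nth 0) /=.
    have Hi : i < size gl by rewrite Hs.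
    rewrite (nth_map (fun _ => None)) //.
    move/(all_nthP (fun _ => None)): Hall => /(_ i Hi).
    by case: (nth _ gl i x).
  + case=> vs [Hg Hh]; rewrite -Hh; congr h.
    apply: (eq_from_nth (x0 := 0)); first by rewrite size_map size_tuple.
    move=> i; rewrite size_map => Hi.
    rewrite (nth_map (fun _ => None)) //.
    have Hi' : i < m by rewrite -Hs.
    by rewrite (Hg (Ordinal Hi')) /= (tnth_nth 0).
- split => //; case=> vs [Hg _].
  have : all (fun g : seq nat -> option nat => g x != None) gl.
    apply/(all_nthP (fun _ => None)) => i Hi.
    have Hi' : i < m by rewrite -Hs.
    by rewrite (Hg (Ordinal Hi')).
  by rewrite Hall.
Qed.

Lemma PRq_comp O m n (h : seq nat -> option nat) (gl : seq (seq nat -> option nat)) : size gl = m -> PRq O m h -> allL (PRq O n) gl ->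
  PRq O n (ocomp gl h).
Proof.
move=> Hs Hh Hg; apply: (PR_comp (gs := fun i (t : n.-tuple nat) => nth (fun _ => None) gl i t) Hh).
- move=> i; apply: allL_nth Hg _; by rewrite Hs.
- exact: comp_spec_ocomp.
Qed.

Definition Kcomp (K : pclass) := forall m n (h : pfun m) (gs : 'I_m -> pfun n) (f : pfun n),
      0 < m -> 0 < n -> K m h -> (forall i, K n (gs i)) -> comp_spec h gs f -> K n f.
Definition Kprim (K : pclass) := forall n (g : pfun n) (h : pfun n.+2) (f : pfun n.+1),
      0 < n -> K n g -> K n.+2 h -> primrec_spec g h f -> K n.+1 f.
Definition Kmu (K : pclass) := forall n (g : pfun n.+1) (f : pfun n),
      0 < n -> K n.+1 g -> mu_spec g f -> K n f.

Lemma Kq_comp K m n (h : seq nat -> option nat) (gl : seq (seq nat -> option nat)) : Kcomp K -> 0 < m -> 0 < n -> size gl = m -> Kq K m h -> allL (Kq K n) gl ->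
  Kq K n (ocomp gl h).
Proof.
move=> HK Hm Hn Hs Hh Hg; apply: (HK _ _ _ (fun i (t : n.-tuple nat) => nth (fun _ => None) gl i t) _ Hm Hn Hh).
- move=> i; apply: allL_nth Hg _; by rewrite Hs.
- exact: comp_spec_ocomp.
Qed.

Lemma PRq_prim O n (g h f : seq nat -> option nat) : PRq O n g -> PRq O n.+2 h ->
  (forall (x : n.-tuple nat) y, f (rcons x y) = prec_aux (fun t => g t) (fun t => h t) x y) ->
  PRq O n.+1 f.
Proof. move=> Hg Hh Hf; apply: (PR_prim Hg Hh) => x y; exact: Hf. Qed.

Lemma PRq_mu O n (g f : seq nat -> option nat) : PRq O n.+1 g -> mu_spec (fun t => g t) (fun t : n.-tuple nat => f t) -> PRq O n f.
Proof. move=> Hg Hf; exact: (PR_mu Hg Hf). Qed.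

Lemma PRq_proj O k i : PRq O k (fun s => Some (nth 0 s i)).
Proof.
case: (ltnP i k) => Hi.
- apply: PRgen_q (PR_proj O (Ordinal Hi)) _ => t /=; by rewrite (tnth_nth 0).
- apply: PRgen_q (PR_zero O k) _ => t; rewrite nth_default // size_tuple //.
Qed.

Lemma PRq_zero O k : PRq O k (fun _ => Some 0).
Proof. exact: PR_zero. Qed.

Lemma PRq_succ O : PRq O 1 (fun s => Some (nth 0 s 0).+1).
Proof. apply: PRgen_q (PR_succ O) _ => t; case/tupleP: t => x t; by rewrite tuple0. Qed.

Fixpoint rec1 (gf : nat -> nat) (hf : nat -> nat -> nat -> nat) x y :=
  match y with 0 => gf x | y'.+1 => hf x y' (rec1 gf hf x y') end.
Fixpoint rec0 (hf : nat -> nat -> nat) y :=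
  match y with 0 => 0 | y'.+1 => hf y' (rec0 hf y') end.

Lemma PRq_rec1 O (g h : seq nat -> option nat) gf hf : PRq O 1 g -> PRq O 3 h ->
  (forall x, g [:: x] = Some (gf x)) -> (forall x y v, h [:: x; y; v] = Some (hf x y v)) ->
  PRq O 2 (fun s => Some (rec1 gf hf (nth 0 s 0) (nth 0 s 1))).
Proof.
move=> Hg Hh Eg Eh; apply: (PRq_prim Hg Hh) => x y.
case/tupleP: x => x0 x; rewrite tuple0.
elim: y => [|y IH] /=; first by rewrite Eg.
by rewrite -IH /= Eh.
Qed.

Lemma PRq_rec0 O (h : seq nat -> option nat) hf : PRq O 2 h ->
  (forall y v, h [:: y; v] = Some (hf y v)) ->
  PRq O 1 (fun s => Some (rec0 hf (nth 0 s 0))).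
Proof.
move=> Hh Eh; apply: (PRq_prim (PRq_zero O 0) Hh) => x y.
rewrite tuple0.
elim: y => [|y IH] //=.
by rewrite -IH /= Eh.
Qed.

Definition prj i : seq nat -> option nat := fun s => Some (nth 0 s i).

Lemma PRq_pred O : PRq O 1 (fun s => Some (nth 0 s 0).-1).
Proof.
apply: PRq_ext (PRq_rec0 (hf := fun y _ => y) (PRq_proj O 2 0) _) _ => //.
move=> t; congr Some; elim: (nth 0 t 0) => //.
Qed.

Lemma PRq_add O : PRq O 2 (fun s => Some (nth 0 s 0 + nth 0 s 1)).
Proof.
have Hh : PRq O 3 (ocomp [:: prj 2] (fun s => Some (nth 0 s 0).+1)).
  apply: PRq_comp (PRq_succ O) _ => //=; split => //; exact: PRq_proj.
apply: PRq_ext (PRq_rec1 (gf := id) (hf := fun _ _ v => v.+1) (PRq_proj O 1 0) Hh _ _) _ => //.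
move=> t; congr Some; elim: (nth 0 t 1) => [|y IH] /=; first by rewrite addn0.
by rewrite IH addnS.
Qed.

Lemma PRq_monus O : PRq O 2 (fun s => Some (nth 0 s 0 - nth 0 s 1)).
Proof.
have Hh : PRq O 3 (ocomp [:: prj 2] (fun s => Some (nth 0 s 0).-1)).
  apply: PRq_comp (PRq_pred O) _ => //=; split => //; exact: PRq_proj.
apply: PRq_ext (PRq_rec1 (gf := id) (hf := fun _ _ v => v.-1) (PRq_proj O 1 0) Hh _ _) _ => //.
move=> t; congr Some; elim: (nth 0 t 1) => [|y IH] /=; first by rewrite subn0.
by rewrite IH subnS.
Qed.

Fixpoint tri s := if s is s'.+1 then tri s' + s'.+1 else 0.

Lemma PRq_tri O : PRq O 1 (fun s => Some (tri (nth 0 s 0))).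
Proof.
have Hh : PRq O 2 (ocomp [:: prj 1; ocomp [:: prj 0] (fun s => Some (nth 0 s 0).+1)]
                     (fun s => Some (nth 0 s 0 + nth 0 s 1))).
  apply: PRq_comp (PRq_add O) _ => //=; split; first exact: PRq_proj.
  split => //; apply: PRq_comp (PRq_succ O) _ => //=; split => //; exact: PRq_proj.
apply: PRq_ext (PRq_rec0 (hf := fun y v => v + y.+1) Hh _) _ => //.
move=> t; congr Some; elim: (nth 0 t 0) => [|y IH] //=.
by rewrite IH.
Qed.

Lemma PRq_const O n : PRq O 1 (fun _ => Some n).
Proof.
elim: n => [|n IH]; first exact: PRq_zero.
apply: PRq_ext (PRq_comp (gl := [:: fun _ => Some n]) _ (PRq_succ O) _) _ => //=.
Qed.

Definition cpair a b := tri (a + b) + b.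

Lemma tri_mono m n : m <= n -> tri m <= tri n.
Proof.
move=> H; rewrite -(subnKC H); elim: (n - m) => [|k IH]; first by rewrite addn0.
by rewrite addnS /=; apply: leq_trans IH (leq_addr _ _).
Qed.

Lemma sfun_ex z : exists s, z < tri s.+1.
Proof.
exists z; elim: z => [|z IH] //=.
rewrite /= in IH; lia.
Qed.

Definition sfun z := ex_minn (sfun_ex z).
Definition p2 z := z - tri (sfun z).
Definition p1 z := sfun z - p2 z.

Lemma sfun_pair a b : sfun (cpair a b) = a + b.
Proof.
rewrite /sfun; case: ex_minnP => s Hs Hmin.
apply/eqP; rewrite eqn_leq; apply/andP; split.
- apply: Hmin; rewrite /cpair /=; lia.
- rewrite leqNgt; apply/negP => Hlt.
  have := tri_mono Hlt; rewrite /cpair in Hs; lia.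
Qed.

Lemma p2_pair a b : p2 (cpair a b) = b.
Proof. by rewrite /p2 sfun_pair /cpair addKn. Qed.

Lemma p1_pair a b : p1 (cpair a b) = a.
Proof. by rewrite /p1 p2_pair sfun_pair addnK. Qed.

Lemma PRq_test O : PRq O 2 (fun s => Some ((nth 0 s 0).+1 - tri (nth 0 s 1).+1)).
Proof.
have Hs : forall k i, PRq O k (ocomp [:: prj i] (fun s => Some (nth 0 s 0).+1)).
  move=> k i; apply: PRq_comp (PRq_succ O) _ => //=; split => //; exact: PRq_proj.
apply: PRq_ext (PRq_comp (gl := [:: ocomp [:: prj 0] (fun s => Some (nth 0 s 0).+1);
   ocomp [:: ocomp [:: prj 1] (fun s => Some (nth 0 s 0).+1)] (fun s => Some (tri (nth 0 s 0)))]) _ (PRq_monus O) _) _ => //=.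
split; first exact: Hs.
split => //; apply: PRq_comp (PRq_tri O) _ => //=; split => //.
Qed.

Lemma PRq_sfun O : PRq O 1 (fun s => Some (sfun (nth 0 s 0))).
Proof.
apply: PRq_mu (PRq_test O) _ => x y.
case/tupleP: x => x0 x; rewrite tuple0 /=.
rewrite /sfun; case: ex_minnP => s Hs Hmin; split.
- case=> <-; split; first by rewrite /= in Hs; congr Some; apply/eqP; rewrite subn_eq0.
  move=> z Hz; exists (x0.+1 - tri z.+1).-1; congr Some; rewrite prednK // subn_gt0.
  rewrite ltnNge; apply/negP => H.
  have := Hmin z H; rewrite leqNgt Hz //.
- case=> [[H0] Hlt]; congr Some.
  have Hy : x0 < tri y.+1 by move/eqP: H0; rewrite subn_eq0.
  apply/eqP; rewrite eqn_leq (Hmin _ Hy) /= leqNgt; apply/negP => Hsy.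
  case: (Hlt s Hsy) => v [] Hv.
  have : x0.+1 - tri s.+1 == 0 by rewrite subn_eq0.
  by rewrite Hv.
Qed.

Lemma PRq_c1 O k (f : nat -> nat) (a : seq nat -> nat) :
  PRq O 1 (fun s => Some (f (nth 0 s 0))) -> PRq O k (fun s => Some (a s)) ->
  PRq O k (fun s => Some (f (a s))).
Proof.
move=> Hf Ha; apply: PRq_ext (PRq_comp (gl := [:: fun s => Some (a s)]) _ Hf _) _ => //=.
Qed.

Lemma PRq_c2 O k (f : nat -> nat -> nat) (a b : seq nat -> nat) :
  PRq O 2 (fun s => Some (f (nth 0 s 0) (nth 0 s 1))) -> PRq O k (fun s => Some (a s)) ->
  PRq O k (fun s => Some (b s)) ->
  PRq O k (fun s => Some (f (a s) (b s))).
Proof.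
move=> Hf Ha Hb; apply: PRq_ext (PRq_comp (gl := [:: fun s => Some (a s); fun s => Some (b s)]) _ Hf _) _ => //=.
Qed.

Lemma PRq_p1 O k (h : seq nat -> option nat) (a : seq nat -> nat) :
  PRq O 1 h -> PRq O k (fun s => Some (a s)) -> PRq O k (fun s => h [:: a s]).
Proof.
move=> Hf Ha; apply: PRq_ext (PRq_comp (gl := [:: fun s => Some (a s)]) _ Hf _) _ => //=.
Qed.

Lemma PRq_p2 O k (h : seq nat -> option nat) (a b : seq nat -> nat) :
  PRq O 2 h -> PRq O k (fun s => Some (a s)) -> PRq O k (fun s => Some (b s)) ->
  PRq O k (fun s => h [:: a s; b s]).
Proof.
move=> Hf Ha Hb; apply: PRq_ext (PRq_comp (gl := [:: fun s => Some (a s); fun s => Some (b s)]) _ Hf _) _ => //=.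
Qed.

Lemma PRq_pj O k i : PRq O k (fun s => Some (nth 0 s i)).
Proof. exact: PRq_proj. Qed.

Lemma PRq_p2f O : PRq O 1 (fun s => Some (p2 (nth 0 s 0))).
Proof.
apply: (PRq_c2 (f := subn) (PRq_monus O) (PRq_pj _ _ 0)).
apply: (PRq_c1 (f := tri) (PRq_tri O)); apply: (PRq_sfun O).
Qed.

Lemma PRq_p1f O : PRq O 1 (fun s => Some (p1 (nth 0 s 0))).
Proof. apply: (PRq_c2 (f := subn) (PRq_monus O) (PRq_sfun O) (PRq_p2f O)). Qed.

Lemma PRq_pair O : PRq O 2 (fun s => Some (cpair (nth 0 s 0) (nth 0 s 1))).
Proof.
apply: (PRq_c2 (f := addn) (PRq_add O) _ (PRq_pj _ _ 1)).
apply: (PRq_c1 (f := tri) (PRq_tri O) (PRq_add O)).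
Qed.

Definition dist a b := (a - b) + (b - a).
Lemma dist0 a b : (dist a b == 0) = (a == b).
Proof. rewrite /dist; apply/eqP/eqP; lia. Qed.

Lemma PRq_dist O : PRq O 2 (fun s => Some (dist (nth 0 s 0) (nth 0 s 1))).
Proof.
apply: (PRq_c2 (f := addn) (PRq_add O) (PRq_monus O)).
exact: (PRq_c2 (f := subn) (PRq_monus O) (PRq_pj _ _ 1) (PRq_pj _ _ 0)).
Qed.

Lemma Kq_c1 K k (h : seq nat -> option nat) (a : seq nat -> nat) : Kcomp K -> 0 < k ->
  Kq K 1 h -> Kq K k (fun s => Some (a s)) -> Kq K k (fun s => h [:: a s]).
Proof.
move=> HK Hk Hf Ha; apply: Kq_ext (Kq_comp (gl := [:: fun s => Some (a s)]) HK _ Hk _ Hf _) _ => //=.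
Qed.

Lemma Kq_c2 K k (h : seq nat -> option nat) (a b : seq nat -> nat) : Kcomp K -> 0 < k ->
  Kq K 2 h -> Kq K k (fun s => Some (a s)) -> Kq K k (fun s => Some (b s)) ->
  Kq K k (fun s => h [:: a s; b s]).
Proof.
move=> HK Hk Hf Ha Hb; apply: Kq_ext (Kq_comp (gl := [:: fun s => Some (a s); fun s => Some (b s)]) HK _ Hk _ Hf _) _ => //=.
Qed.

Definition Kpr (K : pclass) := forall k (f : pfun k), 0 < k -> partial_recursive f -> K k f.

Lemma PR_Kq K k h : Kpr K -> 0 < k -> PRq None k h -> Kq K k h.
Proof. move=> H Hk Hh; exact: H. Qed.

Lemma opt_ext (o1 o2 : option nat) : (forall y, o1 = Some y <-> o2 = Some y) -> o1 = o2.
Proof.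
case: o1 => [a|]; case: o2 => [b|] // H.
- by case: (H a) => /(_ erefl) [->].
- by case: (H a) => /(_ erefl).
- by case: (H b) => _ /(_ erefl).
Qed.

Lemma comp_spec_eq m n (h : pfun m) (gs : 'I_m -> pfun n) f x : comp_spec h gs f ->
  f x = if all (fun i => gs i x != None) (ord_tuple m)
        then h [tuple odflt 0 (gs i x) | i < m] else None.
Proof.
move=> Hc; case: ifP => Hall.
- apply: opt_ext => y; rewrite Hc; split.
  + case=> vs [Hg Hh]; rewrite -Hh; congr h; apply: eq_from_tnth => i.
    by rewrite tnth_mktuple Hg.
  + move=> Hh; exists [tuple odflt 0 (gs i x) | i < m]; split => // i.
    rewrite tnth_mktuple.
    move/all_tnthP: Hall => /(_ i); rewrite tnth_ord_tuple.
    by case: (gs i x).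
- apply: opt_ext => y; rewrite Hc; split => //.
  case=> vs [Hg _].
  have : all (fun i => gs i x != None) (ord_tuple m).
    apply/all_tnthP => i; by rewrite tnth_ord_tuple Hg.
  by rewrite Hall.
Qed.

Lemma allL_map (T : Type) P (F : T -> seq nat -> option nat) (s : seq T) :
  (forall x, P (F x)) -> allL P (map F s).
Proof. move=> H; elim: s => [|x s IH] //=. Qed.

Definition padq k (f : pfun k) : seq nat -> option nat := fun s => liftq f (behead s).

Lemma lift_tup m (f : pfun m) (t : m.-tuple nat) (s : seq nat) : s = t -> liftq f s = f t.
Proof. by move=> ->; rewrite lift_tuple. Qed.

Lemma pad_lemma (K : pclass) (A : nat -> bool) : Kpr K -> Kcomp K -> Kprim K -> Kmu K ->
  Kq K 1 (fun s => Some (nat_of_bool (A (nth 0 s 0)))) ->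
  forall k (f : pfun k), PRgen (Some A) f -> Kq K k.+1 (padq f).
Proof.
move=> Hpr Hco Hpri Hmu HA k f Hf.
elim: Hf => {k f}.
- move=> k; apply: Kq_ext (PR_Kq Hpr _ (PRq_zero _ k.+1)) _ => //.
- apply: Kq_ext (PR_Kq Hpr _ (PRq_c1 (f := succn) (PRq_succ _) (PRq_pj _ 2 1))) _ => // t.
  by rewrite /padq /liftq /thead tnth_mktuple nth_behead.
- move=> k i; apply: Kq_ext (PR_Kq Hpr _ (PRq_pj _ k.+1 i.+1)) _ => // t.
  by rewrite /padq /liftq tnth_mktuple nth_behead.
- move=> A' [<-].
  apply: Kq_ext (Kq_c1 Hco _ HA (PR_Kq Hpr _ (PRq_pj _ 2 1))) _ => // t.
  by rewrite /padq /liftq /thead tnth_mktuple nth_behead.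
- move=> m n h gs f _ IHh _ IHgs Hc.
  have H : Kq K n.+1 (ocomp ((fun _ => Some 0) :: map (fun i => padq (gs i)) (ord_tuple m)) (padq h)).
    apply: (Kq_comp Hco (ltn0Sn m) (ltn0Sn n) _ IHh).
    - by rewrite /= size_map size_enum_ord.
    - split; first exact: (PR_Kq Hpr (ltn0Sn n) (PRq_zero _ _)).
      exact: allL_map.
  apply: Kq_ext H _ => t.
  case/tupleP: t => z x.
  rewrite /padq /= (lift_tup f (t := x)) // (comp_spec_eq _ Hc) /ocomp /= all_map.
  have E : forall i, liftq (gs i) x = gs i x by move=> i; rewrite lift_tuple.
  rewrite (eq_all (a2 := fun i => gs i x != None)); last by move=> i /=; rewrite E.
  case: ifP => // _.
  rewrite -map_comp /= (lift_tup h (t := [tuple odflt 0 (gs i x) | i < m])) //=.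
  by apply: eq_map => i /=; rewrite E.
- move=> n g h f _ IHg _ IHh Hs.
  apply: (Hpri n.+1 _ _ _ (ltn0Sn n) IHg IHh) => x y.
  case/tupleP: x => z x.
  rewrite /padq /= (lift_tup f (t := [tuple of rcons x y])) // Hs.
  elim: y => [|y IH] /=; first by rewrite (lift_tup g (t := x)).
  rewrite IH; case: (prec_aux _ _ _ y) => // v.
  by rewrite (lift_tup h (t := [tuple of rcons [tuple of rcons x y] v])).
- move=> n g f _ IHg Hs.
  apply: (Hmu n.+1 _ _ (ltn0Sn n) IHg) => x y.
  case/tupleP: x => z x.
  rewrite /padq /= (lift_tup f (t := x)) // Hs.
  rewrite (lift_tup g (t := [tuple of rcons x y])) //.
  split; case=> H1 H2; split => // w Hw; case: (H2 w Hw) => v Hv; exists v.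
  + by rewrite (lift_tup g (t := [tuple of rcons x w])).
  + by rewrite -Hv (lift_tup g (t := [tuple of rcons x w])).
Qed.

Lemma allL_cat P s1 s2 : allL P s1 -> allL P s2 -> allL P (s1 ++ s2).
Proof. elim: s1 => [|g s IH] //= [H1 H2] H3; split => //; exact: IH. Qed.

Lemma all_Some (l : seq (seq nat -> option nat)) s :
  (forall g, List.In g l -> exists v, g s = Some v) -> all (fun g => g s != None) l.
Proof.
elim: l => [|g l IH] //= H; apply/andP; split.
- by case: (H g (or_introl erefl)) => v ->.
- apply: IH => g' Hg'; exact: H (or_intror Hg').
Qed.

Lemma PRA_K (K : pclass) (A : nat -> bool) : Kpr K -> Kcomp K -> Kprim K -> Kmu K ->
  Kq K 1 (fun s => Some (nat_of_bool (A (nth 0 s 0)))) ->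
  forall k (f : pfun k), 0 < k -> PRgen (Some A) f -> K k f.
Proof.
move=> Hpr Hco Hpri Hmu HA k f Hk Hf.
have H := pad_lemma Hpr Hco Hpri Hmu HA Hf.
rewrite -(lift_fun f).
have H2 : Kq K k (ocomp ((fun _ => Some 0) :: map prj (iota 0 k)) (padq f)).
  apply: (Kq_comp Hco (ltn0Sn k) Hk _ H); first by rewrite /= size_map size_iota.
  split; first exact: (PR_Kq Hpr Hk (PRq_zero _ _)).
  apply: allL_map => i; exact: (PR_Kq Hpr Hk (PRq_proj _ _ _)).
apply: Kq_ext H2 _ => t.
rewrite /ocomp all_Some; last first.
  move=> g /= [<-|]; first by exists 0.
  by case/List.in_map_iff => i [<- _]; eexists.
rewrite /padq /= -map_comp.
have -> : [seq odflt 0 ((prj i) (t : seq nat)) | i <- iota 0 k] = t.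
  by rewrite -{2}(mkseq_nth 0 t) size_tuple.
done.
Qed.

Lemma mu_exists n (g : pfun n.+1) : exists f : pfun n, mu_spec g f.
Proof.
pose Q (x : n.-tuple nat) (y : nat) := g [tuple of rcons x y] = Some 0 /\
   (forall z, z < y -> exists v, g [tuple of rcons x z] = Some v.+1).
have Quniq : forall x y1 y2, Q x y1 -> Q x y2 -> y1 = y2.
  move=> x y1 y2 [H1 H1'] [H2 H2'].
  case: (ltngtP y1 y2) => // Hlt.
  - by case: (H2' _ Hlt) => v; rewrite H1.
  - by case: (H1' _ Hlt) => v; rewrite H2.
exists (fun x => match excluded_middle_informative (exists y, Q x y) with
                 | left H => Some (proj1_sig (constructive_indefinite_description _ H))
                 | right _ => None end).
move=> x y; case: excluded_middle_informative => H.
- case: constructive_indefinite_description => y0 Hy0 /=; split.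
  + by case=> <-.
  + by move=> Hy; rewrite (Quniq _ _ _ Hy0 Hy).
- split => // Hy; exfalso; apply: H; exists y; exact: Hy.
Qed.

Lemma ocomp_tot (gl : seq (seq nat -> option nat)) h s :
  (forall g, List.In g gl -> exists v, g s = Some v) ->
  ocomp gl h s = h (map (fun g => odflt 0 (g s)) gl).
Proof. by move=> H; rewrite /ocomp all_Some. Qed.

Lemma in_prjs k s g : List.In g (map prj (iota 0 k)) -> exists v, g s = Some v.
Proof. by case/List.in_map_iff => i [<- _]; eexists. Qed.

Lemma map_prjs k s : map (fun g => odflt 0 (g s)) (map prj (iota 0 k)) = map (nth 0 s) (iota 0 k).
Proof. by rewrite -map_comp. Qed.

Lemma split_last2 k (s : seq nat) : size s = k.+2 ->
  map (nth 0 s) (iota 0 k) ++ [:: nth 0 s k; nth 0 s k.+1] = s.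
Proof.
move=> Hs; rewrite -[in RHS](mkseq_nth 0 s) Hs /mkseq -addn2 iotaD map_cat add0n.
by [].
Qed.

Lemma map_nth_prefix k (s1 s2 : seq nat) : size s1 = k ->
  map (nth 0 (s1 ++ s2)) (iota 0 k) = map (nth 0 s1) (iota 0 k).
Proof.
move=> Hs; apply/eq_in_map => i; rewrite mem_iota add0n => /andP [_ Hi].
by rewrite nth_cat Hs Hi.
Qed.

Lemma map_nth_self (s : seq nat) : map (nth 0 s) (iota 0 (size s)) = s.
Proof. exact: mkseq_nth. Qed.

Definition Krec (K : pclass) := forall f : pfun 1, K 1 f ->
     exists (M : nat -> bool) (al om : pfun 1),
       [/\ K 1 al, K 1 om,
           (forall m, M m -> unary al m <> None /\ unary om m <> None),
           K 1 (fun t => Some (nat_of_bool (M (thead t)))) &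
           forall x y, unary f x = Some y <->
             exists m, [/\ M m, unary al m = Some x & unary om m = Some y]].

Definition Kuniv (K : pclass) := exists F : pfun 2, K 2 F /\
     forall f : pfun 1, K 1 f -> exists n, forall x, F [tuple n; x] = unary f x.

Lemma hard (K : pclass) : Kpr K -> Kcomp K -> Kprim K -> Kmu K -> Krec K -> Kuniv K ->
  exists A : nat -> bool, Kq K 1 (fun s => Some (nat_of_bool (A (nth 0 s 0)))) /\
    forall k (f : pfun k.+1), K k.+1 f -> PRgen (Some A) f.
Proof.
move=> Hpr Hco Hpri Hmu Hrec [F [HF Huniv]].
pose G := fun s : seq nat => liftq F [:: p1 (nth 0 s 0); p2 (nth 0 s 0)].
have HG : Kq K 1 G.
  apply: (Kq_c2 Hco _ _ (PR_Kq Hpr _ (PRq_p1f None)) (PR_Kq Hpr _ (PRq_p2f None))) => //.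
  by apply: Kgen_q HF _ => t; rewrite lift_tuple.
case: (Hrec (fun t => G t) HG) => M [al [om [Hal Hom Hdef HM Hiff]]].
pose A := fun c => [&& M (p1 c), al [tuple p1 c] == Some (p1 (p2 c)) & om [tuple p1 c] == Some (p2 (p2 c))].
exists A.
have Hal' : Kq K 1 (liftq al) by apply: Kgen_q Hal _ => t; rewrite lift_tuple.
have Hom' : Kq K 1 (liftq om) by apply: Kgen_q Hom _ => t; rewrite lift_tuple.
pose E := fun s => let c := nth 0 s 0 in
   match liftq al [:: p1 c], liftq om [:: p1 c] with
   | Some a, Some b => Some (1 - (dist a (p1 (p2 c)) + dist b (p2 (p2 c))))
   | _, _ => None end.
have HS4 : PRq None 4 (fun s => Some (1 - (dist (nth 0 s 0) (nth 0 s 1) + dist (nth 0 s 2) (nth 0 s 3)))).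
  apply: (PRq_c2 (f := subn) (PRq_monus _)).
    exact: (PRq_c1 (f := fun _ => 1) (PRq_const _ 1) (PRq_pj _ 4 0)).
  apply: (PRq_c2 (f := addn) (PRq_add _)).
    exact: (PRq_c2 (f := dist) (PRq_dist _) (PRq_pj _ 4 0) (PRq_pj _ 4 1)).
  exact: (PRq_c2 (f := dist) (PRq_dist _) (PRq_pj _ 4 2) (PRq_pj _ 4 3)).
have Hp12 : PRq None 1 (fun s => Some (p1 (p2 (nth 0 s 0)))).
  exact: (PRq_c1 (f := p1) (PRq_p1f _) (PRq_p2f _)).
have Hp22 : PRq None 1 (fun s => Some (p2 (p2 (nth 0 s 0)))).
  exact: (PRq_c1 (f := p2) (PRq_p2f _) (PRq_p2f _)).
have HE : Kq K 1 E.
  apply: Kq_ext (Kq_comp (gl := [:: fun s => liftq al [:: p1 (nth 0 s 0)];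
       fun s => Some (p1 (p2 (nth 0 s 0))); fun s => liftq om [:: p1 (nth 0 s 0)];
       fun s => Some (p2 (p2 (nth 0 s 0)))]) Hco _ _ _ (PR_Kq Hpr _ HS4) _) _ => //.
    split; first exact: (Kq_c1 Hco _ Hal' (PR_Kq Hpr _ (PRq_p1f _))).
    split; first exact: (PR_Kq Hpr _ Hp12).
    split; first exact: (Kq_c1 Hco _ Hom' (PR_Kq Hpr _ (PRq_p1f _))).
    split => //; exact: (PR_Kq Hpr _ Hp22).
  move=> t; rewrite /ocomp /E /=.
  by case: (liftq al _) => [a|]; case: (liftq om _) => [b|].
pose P := fun s : seq nat => if nth 0 s 1 is 0 then Some 0 else E [:: nth 0 s 0].
have HP : Kq K 2 P.
  apply: (Hpri 1 (fun _ => Some 0) (fun t => E [:: nth 0 t 0]) (fun t => P t) (ltn0Sn 0)).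
  - exact: (PR_Kq Hpr _ (PRq_zero _ _)).
  - exact: (Kq_c1 Hco _ HE (PR_Kq Hpr _ (PRq_pj _ 3 0))).
  - move=> x y; case/tupleP: x => x0 x; rewrite tuple0.
    elim: y => [|y IH] //=.
    rewrite -IH /P /=; case: y {IH} => [|y] //=.
    by case: (E _).
have HMq : Kq K 1 (fun s => Some (nat_of_bool (M (nth 0 s 0)))).
  by apply: Kgen_q HM _ => t; rewrite /thead (tnth_nth 0).
have HMp : Kq K 1 (fun s => Some (nat_of_bool (M (p1 (nth 0 s 0))))).
  exact: (Kq_c1 Hco _ HMq (PR_Kq Hpr _ (PRq_p1f _))).
have HAq : Kq K 1 (fun s => Some (nat_of_bool (A (nth 0 s 0)))).
  apply: Kq_ext (Kq_c2 Hco _ HP (PR_Kq Hpr _ (PRq_pj _ 1 0)) HMp) _ => // t.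
  rewrite /P /=; set c := nth 0 t 0.
  case HMc : (M (p1 c)) => /=; last by rewrite /A HMc.
  have [Ha Ho] := Hdef _ HMc.
  rewrite /E /= (lift_tup al (t := [tuple p1 c])) // (lift_tup om (t := [tuple p1 c])) //.
  rewrite /unary in Ha Ho.
  case Eal : (al [tuple p1 c]) Ha => [a|] // _.
  case Eom : (om [tuple p1 c]) Ho => [b|] // _.
  rewrite /A HMc Eal Eom /=; congr Some.
  have -> : (Some a == Some (p1 (p2 c))) = (a == p1 (p2 c)) by apply/eqP/eqP => [[]|->].
  have -> : (Some b == Some (p2 (p2 c))) = (b == p2 (p2 c)) by apply/eqP/eqP => [[]|->].
  case: eqP => H1; case: eqP => H2 /=; rewrite /dist; lia.
split => //.
have HAo : PRq (Some A) 1 (fun s => Some (nat_of_bool (A (nth 0 s 0)))).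
  by apply: PRgen_q (@PR_oracle (Some A) A erefl) _ => t; rewrite /thead (tnth_nth 0).
pose tv := fun x c => (1 - A c) + dist (p1 (p2 c)) x.
have Htest : PRq (Some A) 2 (fun s => Some (tv (nth 0 s 0) (nth 0 s 1))).
  apply: (PRq_c2 (f := addn) (PRq_add _)).
    apply: (PRq_c2 (f := subn) (PRq_monus _)).
      exact: (PRq_c1 (f := fun _ => 1) (PRq_const _ 1) (PRq_pj _ 2 0)).
    exact: (PRq_c1 (f := fun c => nat_of_bool (A c)) HAo (PRq_pj _ 2 1)).
  apply: (PRq_c2 (f := dist) (PRq_dist _) _ (PRq_pj _ 2 0)).
  exact: (PRq_c1 (f := p1) (PRq_p1f _) (PRq_c1 (f := p2) (PRq_p2f _) (PRq_pj _ 2 1))).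
case: (mu_exists (fun t : 2.-tuple nat => Some (tv (nth 0 t 0) (nth 0 t 1)))) => Gm HGm.
have HGmPR : PRgen (Some A) Gm := PR_mu Htest HGm.
pose G' := fun s => match liftq Gm s with Some c => Some (p2 (p2 c)) | None => None end.
have HG' : PRq (Some A) 1 G'.
  apply: PRq_ext (PRq_comp (gl := [:: liftq Gm]) _
     (PRq_c1 (f := fun c => p2 (p2 c)) (PRq_c1 (f := p2) (PRq_p2f _) (PRq_p2f _)) (PRq_pj _ 1 0)) _) _ => //.
    split => //; by apply: PRgen_q HGmPR _ => t; rewrite lift_tuple.
  by move=> t; rewrite /ocomp /G' /=; case: (liftq Gm t).
have GG : forall x, G [:: x] = G' [:: x].
  move=> x; rewrite /G' (lift_tup Gm (t := [tuple x])) //.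
  case E0 : (Gm [tuple x]) => [c|].
  - have [H0 _] := (HGm [tuple x] c).1 E0.
    move: H0 => /= [] /eqP; rewrite addn_eq0 dist0 => /andP [HA' /eqP Hx].
    have HA : A c by move: HA'; case: (A c).
    apply/(Hiff x (p2 (p2 c))); exists (p1 c); move: HA; rewrite /A /unary.
    by case/and3P => [-> /eqP -> /eqP ->]; rewrite Hx.
  - case EG : (G [:: x]) => [y|] //.
    have := (Hiff x y).1 EG; case=> m [Hm Ha Ho].
    have Hex : exists c, tv x c == 0.
      exists (cpair m (cpair x y)).
      rewrite /tv /A !p1_pair !p2_pair Hm /=.
      rewrite /unary in Ha Ho; rewrite Ha Ho !eqxx /=.
      by rewrite p1_pair eqxx /dist subnn.
    case: (ex_minnP Hex) => c Hc Hmin.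
    have : Gm [tuple x] = Some c.
      apply/(HGm [tuple x] c); split; first by rewrite /= (eqP Hc).
      move=> z Hz; exists (tv x z).-1; rewrite /= prednK // lt0n.
      apply/negP => Hz0; have := Hmin _ Hz0; by rewrite leqNgt Hz.
    by rewrite E0.
have Hun : forall f : pfun 1, K 1 f -> PRgen (Some A) f.
  move=> f Hf; case: (Huniv f Hf) => n Hn.
  have H := PRq_p1 HG' (PRq_c2 (f := cpair) (PRq_pair _)
     (PRq_c1 (f := fun _ => n) (PRq_const _ n) (PRq_pj _ 1 0)) (PRq_pj _ 1 0)).
  rewrite -(lift_fun f); apply: PRq_ext H _ => t.
  case/tupleP: t => x t; rewrite tuple0 /=.
  rewrite -GG /G p1_pair p2_pair (lift_tup F (t := [tuple n; x])) // Hn.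
  by rewrite (lift_tup f (t := [tuple x])).
elim=> [|k IH] f Hf; first exact: Hun.
pose g := fun s => liftq f (map (nth 0 s) (iota 0 k) ++ [:: p1 (nth 0 s k); p2 (nth 0 s k)]).
have Hg : Kq K k.+1 g.
  have Hf' : Kq K k.+2 (liftq f) by apply: Kgen_q Hf _ => t; rewrite lift_tuple.
  apply: Kq_ext (Kq_comp (gl := map prj (iota 0 k) ++ [:: fun s => Some (p1 (nth 0 s k)); fun s => Some (p2 (nth 0 s k))]) Hco (ltn0Sn _) (ltn0Sn _) _ Hf' _) _.
  - by rewrite size_cat size_map size_iota addn2.
  - apply: allL_cat; first by apply: allL_map => i; exact: (PR_Kq Hpr _ (PRq_pj _ _ _)).
    split; first exact: (PR_Kq Hpr _ (PRq_c1 (f := p1) (PRq_p1f _) (PRq_pj _ _ k))).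
    split => //; exact: (PR_Kq Hpr _ (PRq_c1 (f := p2) (PRq_p2f _) (PRq_pj _ _ k))).
  - move=> t; rewrite ocomp_tot; last first.
      move=> g0; case/List.in_app_iff; first exact: in_prjs.
      by case=> [<-|[<-|[]]]; eexists.
    by rewrite map_cat map_prjs.
have HgPR : PRq (Some A) k.+1 g := IH _ Hg.
rewrite -(lift_fun f).
apply: PRq_ext (PRq_comp (gl := map prj (iota 0 k) ++ [:: fun s => Some (cpair (nth 0 s k) (nth 0 s k.+1))]) _ HgPR _) _.
- by rewrite size_cat size_map size_iota addn1.
- apply: allL_cat; first by apply: allL_map => i; exact: PRq_pj.
  split => //; exact: (PRq_c2 (f := cpair) (PRq_pair _) (PRq_pj _ _ k) (PRq_pj _ _ k.+1)).
- move=> t; rewrite ocomp_tot; last first.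
    move=> g0; case/List.in_app_iff; first exact: in_prjs.
    by case=> [<-|[]]; eexists.
  rewrite map_cat map_prjs /= /g.
  have Hs : size (map (nth 0 t) (iota 0 k)) = k by rewrite size_map size_iota.
  rewrite map_nth_prefix // nth_cat Hs ltnn subnn /= p1_pair p2_pair.
  have -> : map (nth 0 (map (nth 0 t) (iota 0 k))) (iota 0 k) = map (nth 0 t) (iota 0 k).
    apply/eq_in_map => i; rewrite mem_iota add0n => /andP [_ Hi].
    by rewrite (nth_map 0) ?size_iota // nth_iota.
  by rewrite split_last2 // size_tuple.
Qed.

Unset Implicit Arguments.

Theorem mainTheorem1 (K : pclass) :
  (* (1) closure *)
  (forall k (f : pfun k), 0 < k -> partial_recursive f -> K k f) ->
  (forall m n (h : pfun m) (gs : 'I_m -> pfun n) (f : pfun n),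
      0 < m -> 0 < n -> K m h -> (forall i, K n (gs i)) -> comp_spec h gs f -> K n f) ->
  (forall n (g : pfun n) (h : pfun n.+2) (f : pfun n.+1),
      0 < n -> K n g -> K n.+2 h -> primrec_spec g h f -> K n.+1 f) ->
  (forall n (g : pfun n.+1) (f : pfun n),
      0 < n -> K n.+1 g -> mu_spec g f -> K n f) ->
  (* (2) computation records *)
  (forall f : pfun 1, K 1 f ->
     exists (M : nat -> bool) (al om : pfun 1),
       [/\ K 1 al, K 1 om,
           (forall m, M m -> unary al m <> None /\ unary om m <> None),
           K 1 (fun t => Some (nat_of_bool (M (thead t)))) &
           forall x y, unary f x = Some y <->
             exists m, [/\ M m, unary al m = Some x & unary om m = Some y]]) ->
  (* (3) programs *)
  (exists F : pfun 2, K 2 F /\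
     forall f : pfun 1, K 1 f -> exists n, forall x, F [tuple n; x] = unary f x) ->
  exists A : nat -> bool,
    forall k (f : pfun k), 0 < k -> (K k f <-> partial_recursive_in A f).
Proof.
move=> Hpr Hco Hpri Hmu Hrec Huniv.
case: (hard Hpr Hco Hpri Hmu Hrec Huniv) => A [HA Hdir].
exists A => k f Hk; split.
- case: k f Hk => // k f _ Hf; exact: Hdir.
- exact: (PRA_K Hpr Hco Hpri Hmu HA Hk).
Qed.
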